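(* Fix any $(2^{nR},2^{nR_f},n)$ code for the wiretap channel with causal state information and secure feedback described in the context, and let $M,X^n,Y^n,Z^n,S^n,K_f^n$ be the induced random variables. Then for each $j\in\{1,\dots,n\}$, \begin{multline*} H(K^{j}_{f}|Z^{j},S^{j})+I(M,X^{j};Y^{j}|K^{j}_{f},Z^{j},S^{j})+H(S^{j}|Z^{j})\\ \le H(K^{j-1}_{f}|Z^{j-1},S^{j-1})+I(M,X^{j-1};Y^{j-1}|K^{j-1}_{f},Z^{j-1},S^{j-1})+H(S^{j-1}|Z^{j-1})\\ +H(K_{j}^{f}|M,X^{j-1},K^{j-1}_{f},Z^{j-1},S^{j-1})+I(X_{j};Y_{j}|Z_{j},S_{j})+H(S_{j}|Z_{j}), \end{multline*} where quantities involving sequences of length $0$ are interpreted with empty sequences.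
   Context: Model: finite alphabets; state $S^n$ i.i.d. $\sim p(s)$; memoryless channel $p(y_i,z_i|x^i,y^{i-1},z^{i-1},s_i)=p(y_i,z_i|x_i,s_i)$, with $Y$ the legitimate output and $Z$ the eavesdropper output. The message $M$ is uniform on $\{1,\dots,2^{nR}\}$ and independent of $S^n$. Feedback symbols $K^f_i$, $i=1,\dots,n$, are generated according to $p(k^f_i|y^{i-1},k_f^{i-1})$, where $K^{i}_f=(K^f_1,\dots,K^f_i)$ denotes the feedback vector (and $K^f_i$ a single symbol); the encoder produces $X_i$ according to $p(x_i|m,x^{i-1},s^i,k_f^i)$. Notation $A^j=(A_1,\dots,A_j)$. *)

(* Defs.v *)
From HB Require Import structures.
From mathcomp Require Import all_boot all_order all_algebra.
From mathcomp Require Import reals exp.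
Set Implicit Arguments. Unset Strict Implicit. Unset Printing Implicit Defensive.
Import Order.TTheory GRing.Theory Num.Theory.
Local Open Scope ring_scope.

Section Info.
Variables (R : realType) (T : finType) (P : T -> R).

Definition log2 (x : R) : R := ln x / ln 2.

Definition prob (E : pred T) : R := \sum_(w | E w) P w.

Definition condH (TA TB : eqType) (A : T -> TA) (B : T -> TB) : R :=
  - \sum_w P w *
      log2 (prob (fun w' => (A w' == A w) && (B w' == B w)) /
            prob (fun w' => B w' == B w)).

Definition condMI (TA TB TC : eqType) (A : T -> TA) (B : T -> TB) (C : T -> TC) : R :=
  condH A C - condH A (fun w => (B w, C w)).
End Info.

(* seqpre g^j = (g_1,...,g_j) of a length-n sequence (0-based: g 0,...,g (j-1)) *)
Definition seqpre (n : nat) (A : Type) (g : {ffun 'I_n -> A}) (j : nat) : seq A :=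
  [seq g i | i : 'I_n <- enum 'I_n & (i < j)%N].

Section Code.
Variables (R : realType) (n : nat) (M X Y Z S K : finType).

Definition Omega := (M * {ffun 'I_n -> X} * {ffun 'I_n -> Y} * {ffun 'I_n -> Z}
                       * {ffun 'I_n -> S} * {ffun 'I_n -> K})%type.

Definition msg (w : Omega) : M := w.1.1.1.1.1.
Definition xs (w : Omega) : {ffun 'I_n -> X} := w.1.1.1.1.2.
Definition ys (w : Omega) : {ffun 'I_n -> Y} := w.1.1.1.2.
Definition zs (w : Omega) : {ffun 'I_n -> Z} := w.1.1.2.
Definition ss (w : Omega) : {ffun 'I_n -> S} := w.1.2.
Definition ks (w : Omega) : {ffun 'I_n -> K} := w.2.

(* pS      : state distribution p(s)
   W x s y z : channel p(y,z|x,s)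
   f i y^{i} k^{i} k : feedback p(k^f_{i+1} | y^{i}, k_f^{i})   (time i is 0-based)
   e i m x^{i} s^{i+1} k^{i+1} x : encoder p(x_{i+1} | m, x^{i}, s^{i+1}, k_f^{i+1}) *)
Variables (pS : S -> R) (W : X -> S -> Y -> Z -> R)
          (f : nat -> seq Y -> seq K -> K -> R)
          (e : nat -> M -> seq X -> seq S -> seq K -> X -> R).

Definition joint (w : Omega) : R :=
  (#|M|%:R)^-1 *
  \prod_(i < n)
     (pS (ss w i)
      * f i (seqpre (ys w) i) (seqpre (ks w) i) (ks w i)
      * e i (msg w) (seqpre (xs w) i) (seqpre (ss w) i.+1) (seqpre (ks w) i.+1) (xs w i)
      * W (xs w i) (ss w i) (ys w i) (zs w i)).
End Code.

(* Main.v *)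
Require Import Defs.
From HB Require Import structures.
From mathcomp Require Import all_boot all_order all_algebra.
From mathcomp Require Import reals exp lra ring.
Import Order.TTheory GRing.Theory Num.Theory.
Local Open Scope ring_scope.

Set Implicit Arguments. Unset Strict Implicit.

Section Gen.
Variables (R : realType) (T : finType) (P : T -> R).
Hypothesis P_ge0 : forall w, 0 <= P w.

Definition Hj (TV : eqType) (V : T -> TV) : R :=
  - \sum_w P w * log2 (prob P (fun w' => V w' == V w)).

Lemma prob_ge0 E : 0 <= prob P E.
Proof. by apply: sumr_ge0 => w _; exact: P_ge0. Qed.

Lemma prob_ge_P (E : pred T) w : E w -> P w <= prob P E.
Proof.
move=> Ew; rewrite /prob (bigD1 w) //= lerDl; apply: sumr_ge0 => ? _; exact: P_ge0.
Qed.

Lemma prob_gt0 (E : pred T) w : 0 < P w -> E w -> 0 < prob P E.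
Proof. move=> Pw Ew; exact: lt_le_trans Pw (prob_ge_P Ew). Qed.

Lemma P_cases w : P w = 0 \/ 0 < P w.
Proof. by have := P_ge0 w; rewrite le_eqVlt => /orP[/eqP<-|]; [left|right]. Qed.

Lemma log2M (x y : R) : 0 < x -> 0 < y -> log2 (x * y) = log2 x + log2 y.
Proof. by move=> x0 y0; rewrite /log2 lnM ?posrE // mulrDl. Qed.

Lemma log2V (x : R) : 0 < x -> log2 (x^-1) = - log2 x.
Proof. by move=> x0; rewrite /log2 lnV ?posrE // mulNr. Qed.

Lemma ln2_gt0 : 0 < ln (2 : R).
Proof. by apply: ln_gt0; rewrite ltr1n. Qed.

Lemma log2_le (x : R) : 0 < x -> log2 x <= (x - 1) / ln 2.
Proof.
move=> x0; rewrite /log2 ler_pM2r ?invr_gt0 ?ln2_gt0 //.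
have := expR_ge1Dx (ln x); rewrite lnK ?posrE // => h; lra.
Qed.

Lemma divxx_le1 (x : R) : x / x <= 1.
Proof. by have [->|x0] := eqVneq x 0; rewrite ?mul0r ?divff. Qed.

Lemma condH_Hj (TA TB : eqType) (A : T -> TA) (B : T -> TB) :
  condH P A B = Hj (fun w => (A w, B w)) - Hj B.
Proof.
rewrite /condH /Hj.
have -> : \sum_w P w * log2 (prob P (fun w' => (A w' == A w) && (B w' == B w)) /
            prob P (fun w' => B w' == B w)) =
          \sum_w (P w * log2 (prob P (fun w' => (A w', B w') == (A w, B w))) -
                  P w * log2 (prob P (fun w' => B w' == B w))).
  apply: eq_bigr => w _.
  have -> : prob P (fun w' => (A w', B w') == (A w, B w)) =
            prob P (fun w' => (A w' == A w) && (B w' == B w)).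
    by apply: eq_bigl => w'; rewrite xpair_eqE.
  have [->|Pw] := P_cases w; first by rewrite !mul0r subrr.
  have h1 := prob_gt0 (E := fun w' => (A w' == A w) && (B w' == B w)) Pw.
  have h2 := prob_gt0 (E := fun w' => B w' == B w) Pw.
  rewrite log2M ?h1 ?h2 ?eqxx // ?invr_gt0 ?h2 ?eqxx // log2V ?h2 ?eqxx //.
  by rewrite mulrDr mulrN.
by rewrite sumrB opprB addrC opprK.
Qed.

Lemma Hj_fib (TV TV' : eqType) (V : T -> TV) (V' : T -> TV') :
  (forall w w', (V w' == V w) = (V' w' == V' w)) -> Hj V = Hj V'.
Proof.
move=> h; rewrite /Hj; congr (- _); apply: eq_bigr => w _; congr (_ * log2 _).
by apply: eq_bigl => w'; rewrite h.
Qed.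

End Gen.

Section Gen2.
Variables (R : realType) (T : finType) (P : T -> R).
Hypothesis P_ge0 : forall w, 0 <= P w.
Variables (TA TB TC : eqType) (A : T -> TA) (B : T -> TB) (C : T -> TC).

Let pABC w := prob P (fun w' => (A w' == A w) && (B w' == B w) && (C w' == C w)).
Let pAC w := prob P (fun w' => (A w' == A w) && (C w' == C w)).
Let pBC w := prob P (fun w' => (B w' == B w) && (C w' == C w)).
Let pC w := prob P (fun w' => C w' == C w).

Lemma key_sum : \sum_w P w * (pAC w * pBC w / (pABC w * pC w)) <= \sum_w P w.
Proof.
have E1 : forall w, P w * (pAC w * pBC w / (pABC w * pC w)) =
   \sum_w1 \sum_w2 (if [&& A w1 == A w, C w1 == C w, B w2 == B w & C w2 == C w]
                    then P w1 * P w2 * (P w / (pABC w * pC w)) else 0).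
  move=> w; rewrite /pAC /pBC /prob.
  rewrite (big_mkcond (fun i => (A i == A w) && _)).
  rewrite (big_mkcond (fun i => (B i == B w) && _)) /= mulrC -!mulrA.
  rewrite mulr_suml; apply: eq_bigr => w1 _.
  rewrite mulr_suml mulr_sumr; apply: eq_bigr => w2 _.
  case: (A w1 == A w); case: (C w1 == C w); case: (B w2 == B w);
    case: (C w2 == C w) => /=; rewrite ?(mul0r, mulr0) //.
  by rewrite !mulrA mulrAC.
under eq_bigr do rewrite E1.
rewrite (exchange_big _ _ _ _ _ (fun w w1 => \sum_w2 _)).
under eq_bigr do rewrite exchange_big.
have E2 : forall w1 w2,
  \sum_w (if [&& A w1 == A w, C w1 == C w, B w2 == B w & C w2 == C w]
          then P w1 * P w2 * (P w / (pABC w * pC w)) else 0)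
  <= (if C w2 == C w1 then P w1 * P w2 / pC w1 else 0).
  move=> w1 w2; have [hc|hc] := eqVneq (C w2) (C w1).
    set q := prob P (fun w' => (A w' == A w1) && (B w' == B w2) && (C w' == C w1)).
    have -> : \sum_w (if [&& A w1 == A w, C w1 == C w, B w2 == B w & C w2 == C w]
          then P w1 * P w2 * (P w / (pABC w * pC w)) else 0) =
          \sum_(w | (A w == A w1) && (B w == B w2) && (C w == C w1))
             (P w1 * P w2 / pC w1 * (P w / q)).
      rewrite [in RHS]big_mkcond; apply: eq_bigr => w _; rewrite hc.
      rewrite [A w1 == _]eq_sym [B w2 == _]eq_sym [C w1 == _]eq_sym.
      case: (A w =P A w1) => [ha|_] //=.
      case: (C w =P C w1) => [hcw|_] //=; rewrite ?andbF //.
      case: (B w =P B w2) => [hb|_] //=.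
      rewrite /pABC /pC ha hb hcw -/q.
      by rewrite invfM; ring.
    rewrite -mulr_sumr -mulr_suml.
    rewrite [X in X / q](_ : _ = q) //.
    rewrite -[X in _ <= X]mulr1 ler_wpM2l ?divxx_le1 //.
    by rewrite mulr_ge0 ?invr_ge0 ?prob_ge0 ?mulr_ge0.
  rewrite big1 // => w _.
  case: (C w1 =P C w) => [h1|]; last by rewrite !andbF.
  case: (C w2 =P C w) => [h2|]; last by rewrite !andbF.
  by move: hc; rewrite h1 h2 eqxx.
apply: (le_trans (y := \sum_w1 \sum_w2 (if C w2 == C w1 then P w1 * P w2 / pC w1 else 0))).
  by apply: ler_sum => w1 _; apply: ler_sum => w2 _; exact: E2.
apply: ler_sum => w1 _.
rewrite -big_mkcond /=; under eq_bigr do rewrite mulrAC.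
rewrite -mulr_sumr -mulrA [X in _ * (_ * X)](_ : _ = pC w1) // mulrC.
rewrite -[X in _ <= X]mul1r ler_wpM2r //; rewrite mulrC; exact: divxx_le1.
Qed.

Lemma Hj_submod : Hj P (fun w => (A w, B w, C w)) + Hj P C <=
   Hj P (fun w => (A w, C w)) + Hj P (fun w => (B w, C w)).
Proof.
have e1 : Hj P (fun w => (A w, B w, C w)) = - \sum_w P w * log2 (pABC w).
  rewrite /Hj; congr (- _); apply: eq_bigr => w _; congr (_ * log2 _).
have e2 : Hj P (fun w => (A w, C w)) = - \sum_w P w * log2 (pAC w).
  rewrite /Hj; congr (- _); apply: eq_bigr => w _; congr (_ * log2 _).
have e3 : Hj P (fun w => (B w, C w)) = - \sum_w P w * log2 (pBC w).
  rewrite /Hj; congr (- _); apply: eq_bigr => w _; congr (_ * log2 _).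
have e4 : Hj P C = - \sum_w P w * log2 (pC w) by [].
pose r w := pAC w * pBC w / (pABC w * pC w).
have H1 : \sum_w P w * log2 (r w) = \sum_w (P w * log2 (pAC w) + P w * log2 (pBC w)
      - P w * log2 (pABC w) - P w * log2 (pC w)).
  apply: eq_bigr => w _.
  have [->|Pw] := P_cases P_ge0 w; first by rewrite !mul0r; lra.
  have g1 : 0 < pABC w by apply: (prob_gt0 P_ge0 Pw); rewrite !eqxx.
  have g2 : 0 < pAC w by apply: (prob_gt0 P_ge0 Pw); rewrite !eqxx.
  have g3 : 0 < pBC w by apply: (prob_gt0 P_ge0 Pw); rewrite !eqxx.
  have g4 : 0 < pC w by apply: (prob_gt0 P_ge0 Pw); rewrite !eqxx.
  have -> : r w = pAC w * pBC w / (pABC w * pC w) by [].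
  rewrite log2M ?mulr_gt0 ?invr_gt0 //.
  rewrite (@log2V R (pABC w * pC w)) ?mulr_gt0 // (@log2M R (pAC w)) // (@log2M R (pABC w)) //.
  lra.
  by rewrite mulr_gt0.
rewrite !sumrB big_split /= in H1.
have H2 : \sum_w P w * log2 (r w) <= 0.
  apply: (le_trans (y := \sum_w (P w * r w - P w) * (ln 2)^-1)).
    apply: ler_sum => w _.
    have [->|Pw] := P_cases P_ge0 w; first by rewrite !mul0r subrr mul0r.
    have g1 : 0 < pABC w by apply: (prob_gt0 P_ge0 Pw); rewrite !eqxx.
    have g2 : 0 < pAC w by apply: (prob_gt0 P_ge0 Pw); rewrite !eqxx.
    have g3 : 0 < pBC w by apply: (prob_gt0 P_ge0 Pw); rewrite !eqxx.
    have g4 : 0 < pC w by apply: (prob_gt0 P_ge0 Pw); rewrite !eqxx.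
    have rp : 0 < r w by rewrite /r mulr_gt0 ?invr_gt0 ?mulr_gt0.
    have -> : (P w * r w - P w) * (ln 2)^-1 = P w * ((r w - 1) / ln 2) by ring.
    by rewrite ler_wpM2l ?P_ge0 // log2_le.
  rewrite -mulr_suml sumrB; apply: mulr_le0_ge0; last by rewrite invr_ge0 ltW // ln2_gt0.
  rewrite subr_le0; exact: key_sum.
rewrite e1 e2 e3 e4; lra.
Qed.
End Gen2.

Section Gen3.
Variables (R : realType) (T : finType) (P : T -> R).
Hypothesis P_ge0 : forall w, 0 <= P w.
Variables (TA TF TC : eqType) (A : T -> TA) (F : T -> TF) (C : T -> TC) (phi : TA -> T -> R).
Hypothesis hFC : forall w w', F w' == F w -> C w' == C w.
Hypothesis hphi : forall a w w', C w' == C w -> phi a w' = phi a w.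
Hypothesis hP : forall a w, prob P (fun w' => (A w' == a) && (F w' == F w))
                         = phi a w * prob P (fun w' => F w' == F w).

Lemma if_sum (c : bool) (G : T -> R) :
  (if c then \sum_i G i else 0) = \sum_i (if c then G i else 0).
Proof. by case: c; rewrite // big1. Qed.

Let pF w := prob P (fun w' => F w' == F w).

Lemma tower a w0 : prob P (fun w' => (A w' == a) && (C w' == C w0))
                   = phi a w0 * prob P (fun w' => C w' == C w0).
Proof.
have e1 : phi a w0 * prob P (fun w' => C w' == C w0) =
   \sum_(w | C w == C w0) P w / pF w * prob P (fun w' => (A w' == a) && (F w' == F w)).
  rewrite {1}/prob mulr_sumr; apply: eq_bigr => w hw.
  rewrite -(hphi a hw) hP.
  have [->|Pw] := P_cases P_ge0 w; first by rewrite !(mul0r, mulr0).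
  have g : 0 < pF w by apply: (prob_gt0 P_ge0 Pw); rewrite eqxx.
  rewrite /pF; field; exact: lt0r_neq0 g.
rewrite e1 /prob; apply/esym.
under eq_bigr do rewrite mulr_sumr.
rewrite big_mkcond /=.
under eq_bigr do rewrite big_mkcond /=.
under eq_bigr do rewrite if_sum.
rewrite exchange_big /= [in RHS]big_mkcond /=; apply: eq_bigr => w' _.
have [Pw'0|Pw'] := P_cases P_ge0 w'.
  by rewrite Pw'0 big1 ?if_same // => w _; rewrite !mulr0 !if_same.
have g : 0 < pF w' by apply: (prob_gt0 P_ge0 Pw'); rewrite eqxx.
case: (A w' =P a) => [ha|_] /=; last by rewrite big1 // => w _; rewrite !if_same.
have -> : \sum_w (if C w == C w0 then if F w' == F w then P w / pF w * P w' else 0 else 0)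
   = \sum_w (if C w' == C w0 then (if F w == F w' then P w / pF w' * P w' else 0) else 0).
  apply: eq_bigr => w _.
  case: (F w' =P F w) => [hf|hf]; last first.
    by rewrite [F w == _]eq_sym; case: (F w' =P F w) => [/hf []|_]; rewrite !if_same.
  have := hFC (w := w) (w' := w') (introT eqP hf) => /eqP hc.
  by rewrite /pF -hc hf eqxx.
case: (C w' =P C w0) => _ /=; last by rewrite big1.
rewrite -big_mkcond /= -mulr_suml -mulr_suml.
rewrite -/(prob P (fun w => F w == F w')) -/(pF w') mulfV ?mul1r //.
exact: lt0r_neq0 g.
Qed.

Lemma condH_CI : condH P A F = condH P A C.
Proof.
rewrite /condH; congr (- _); apply: eq_bigr => w _.
have [->|Pw] := P_cases P_ge0 w; first by rewrite !mul0r.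
congr (_ * log2 _).
have g1 : 0 < pF w by apply: (prob_gt0 P_ge0 Pw); rewrite eqxx.
have g2 : 0 < prob P (fun w' => C w' == C w) by apply: (prob_gt0 P_ge0 Pw); rewrite eqxx.
rewrite hP tower mulfK ?mulfK //; [exact: lt0r_neq0 g2 | exact: lt0r_neq0 g1].
Qed.
End Gen3.

Section Gen4.
Variables (R : realType) (T : finType) (P : T -> R).
Hypothesis P_ge0 : forall w, 0 <= P w.
Variables (TA : finType) (TF TC : eqType) (A : T -> TA) (F : T -> TF) (C : T -> TC)
  (psi : TA -> T -> R) (kap : T -> R).
Hypothesis hFC : forall w w', F w' == F w -> C w' == C w.
Hypothesis hpsi : forall a w w', C w' == C w -> psi a w' = psi a w.
Hypothesis hsum : forall w, \sum_a psi a w = 1.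
Hypothesis hP : forall a w, prob P (fun w' => (A w' == a) && (F w' == F w)) = psi a w * kap w.

Lemma condH_CI2 : condH P A F = condH P A C.
Proof.
apply: (condH_CI P_ge0 (phi := psi)) => // a w.
have -> : prob P (fun w' => F w' == F w) = kap w.
  rewrite /prob (partition_big A predT) //=.
  rewrite -[RHS]mul1r -(hsum w) mulr_suml; apply: eq_bigr => a' _.
  by rewrite -hP /prob; apply: eq_bigl => w'; rewrite andbC.
exact: hP.
Qed.
End Gen4.

Section Seqpre.
Variable n : nat.

Definition Lord (j : nat) : seq 'I_n := [seq i : 'I_n <- enum 'I_n | (i < j)%N].

Lemma seqpreE (A : Type) (g : {ffun 'I_n -> A}) j : seqpre g j = map g (Lord j).
Proof. by []. Qed.

Lemma Lord_val j : (j <= n)%N -> map val (Lord j) = iota 0 j.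
Proof.
move=> hj; rewrite /Lord -(filter_map val (fun x => (x < j)%N)) val_enum_ord.
by have := filter_iota_ltn 0 hj; rewrite add0n.
Qed.

Lemma Lord_S (t : 'I_n) : Lord t.+1 = rcons (Lord t) t.
Proof.
have h : injective (fun i : 'I_n => val i) by exact: val_inj.
apply: (inj_map h); rewrite map_rcons (Lord_val (ltn_ord t)) (Lord_val (ltnW (ltn_ord t))).
by rewrite -addn1 iotaD add0n cats1.
Qed.

Lemma seqpreS (A : Type) (g : {ffun 'I_n -> A}) (t : 'I_n) :
  seqpre g t.+1 = rcons (seqpre g t) (g t).
Proof. by rewrite !seqpreE Lord_S map_rcons. Qed.

Definition updf (t : 'I_n) (A : Type) (g : {ffun 'I_n -> A}) (a : A) : {ffun 'I_n -> A} :=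
  [ffun i => if i == t then a else g i].

Lemma seqpre_upd (t : 'I_n) (A : Type) (g : {ffun 'I_n -> A}) a j :
  (j <= t)%N -> seqpre (updf t g a) j = seqpre g j.
Proof.
move=> hj; rewrite !seqpreE; apply/eq_in_map => i; rewrite mem_filter => /andP[hi _].
rewrite ffunE; case: eqP => // hit; move: hi; rewrite hit => hi.
by move: (leq_trans hi hj); rewrite ltnn.
Qed.

Lemma updf_t (t : 'I_n) (A : Type) (g : {ffun 'I_n -> A}) a : updf t g a t = a.
Proof. by rewrite ffunE eqxx. Qed.

Lemma updf_lt (t i : 'I_n) (A : Type) (g : {ffun 'I_n -> A}) a :
  (i < t)%N -> updf t g a i = g i.
Proof. by move=> h; rewrite ffunE; case: eqP => // hi; move: h; rewrite hi ltnn. Qed.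

Lemma seqpre_n (A : eqType) (g g' : {ffun 'I_n -> A}) :
  (seqpre g n == seqpre g' n) = (g == g').
Proof.
apply/eqP/eqP => [h|->] //; apply/ffunP => i.
have hL : Lord n = enum 'I_n by rewrite /Lord; apply/all_filterP/allP => k _; exact: ltn_ord.
move: h; rewrite !seqpreE hL => /eq_in_map h; apply: h; exact: mem_enum.
Qed.
End Seqpre.

Section Chan.
Variables (R : realType) (n : nat) (M X Y Z S K : finType).
Variables (pS : S -> R) (W : X -> S -> Y -> Z -> R)
  (f : nat -> seq Y -> seq K -> K -> R)
  (e : nat -> M -> seq X -> seq S -> seq K -> X -> R).
Hypotheses (hM : (0 < #|M|)%N)
  (pS_ge0 : forall s, 0 <= pS s) (pS_sum : \sum_s pS s = 1)
  (W_ge0 : forall x s y z, 0 <= W x s y z)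
  (W_sum : forall x s, \sum_y \sum_z W x s y z = 1)
  (f_ge0 : forall i ys ks k, 0 <= f i ys ks k)
  (f_sum : forall i ys ks, \sum_k f i ys ks k = 1)
  (e_ge0 : forall i m xs ss ks x, 0 <= e i m xs ss ks x)
  (e_sum : forall i m xs ss ks, \sum_x e i m xs ss ks x = 1).

Local Notation Om := (Omega n M X Y Z S K).
Local Notation P := (@joint R n M X Y Z S K pS W f e).

Definition fac (i : 'I_n) (w : Om) : R :=
      (pS (ss w i)
      * f i (seqpre (ys w) i) (seqpre (ks w) i) (ks w i)
      * e i (msg w) (seqpre (xs w) i) (seqpre (ss w) i.+1) (seqpre (ks w) i.+1) (xs w i)
      * W (xs w i) (ss w i) (ys w i) (zs w i)).

Definition G (j : nat) (w : Om) : R := (#|M|%:R)^-1 * \prod_(i < n | (i < j)%N) fac i w.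

Definition pre (j : nat) (w : Om) :=
  (msg w, seqpre (xs w) j, seqpre (ys w) j, seqpre (zs w) j, seqpre (ss w) j, seqpre (ks w) j).

Definition V := (K * (S * (X * (Y * Z))))%type.

Definition tm (t : 'I_n) (w : Om) : V := (ks w t, (ss w t, (xs w t, (ys w t, zs w t)))).

Definition upd (t : 'I_n) (w : Om) (v : V) : Om :=
  (msg w, updf t (xs w) v.2.2.1, updf t (ys w) v.2.2.2.1, updf t (zs w) v.2.2.2.2,
   updf t (ss w) v.2.1, updf t (ks w) v.1).

Lemma P_ge0 w : 0 <= P w.
Proof.
rewrite /joint mulr_ge0 ?invr_ge0 ?ler0n //; apply: prodr_ge0 => i _.
by rewrite !mulr_ge0.
Qed.

Lemma P_G w : P w = G n w.
Proof. rewrite /joint /G; congr (_ * _); apply: eq_bigl => i; exact/esym/ltn_ord. Qed.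

Lemma G_S (t : 'I_n) w : G t.+1 w = G t w * fac t w.
Proof.
rewrite /G -mulrA; congr (_ * _).
rewrite (bigD1 t) ?ltnSn //= mulrC; congr (_ * _); apply: eq_bigl => i.
by rewrite ltnS ltn_neqAle val_eqE andbC.
Qed.

Lemma fac_upd (t i : 'I_n) w v : (i < t)%N -> fac i (upd t w v) = fac i w.
Proof.
move=> h; rewrite /fac /= !seqpre_upd ?(ltnW h) // !updf_lt //.
Qed.

Lemma G_upd (t : 'I_n) w v j : (j <= t)%N -> G j (upd t w v) = G j w.
Proof.
move=> hj; rewrite /G; congr (_ * _); apply: eq_bigr => i hi.
by apply: fac_upd; exact: leq_trans hi hj.
Qed.

Lemma fac_upd_t (t : 'I_n) w v : fac t (upd t w v) =
  pS v.2.1 * f t (seqpre (ys w) t) (seqpre (ks w) t) v.1 *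
  e t (msg w) (seqpre (xs w) t) (rcons (seqpre (ss w) t) v.2.1)
      (rcons (seqpre (ks w) t) v.1) v.2.2.1 * W v.2.2.1 v.2.1 v.2.2.2.1 v.2.2.2.2.
Proof.
by rewrite /fac /= !seqpreS !seqpre_upd // !updf_t.
Qed.


Lemma sum_pair (A B : finType) (F : A * B -> R) :
  \sum_p F p = \sum_a \sum_b F (a, b).
Proof. by rewrite (pair_bigA _ (fun a b => F (a, b))); apply: eq_bigr => -[a b]. Qed.

Lemma sum_pair1 (A B : finType) (F : A * B -> R) a :
  \sum_(p | p.1 == a) F p = \sum_b F (a, b).
Proof.
rewrite -(@big_pred1_eq R 0 +%R A a (fun a' => \sum_b F (a', b))) pair_big.
by apply: eq_big => [[a' b]|[a' b] _] //=; rewrite andbT.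
Qed.

Lemma sum_fac_k (t : 'I_n) w k :
  \sum_(r : S * (X * (Y * Z))) fac t (upd t w (k, r)) = f t (seqpre (ys w) t) (seqpre (ks w) t) k.
Proof.
under eq_bigr do rewrite fac_upd_t /=.
rewrite sum_pair; under eq_bigr do rewrite sum_pair.
under eq_bigr do under eq_bigr do rewrite sum_pair /=.
set c := f _ _ _ k.
have e1 : forall s x, \sum_y \sum_z (pS s * c * e t (msg w) (seqpre (xs w) t)
      (rcons (seqpre (ss w) t) s) (rcons (seqpre (ks w) t) k) x * W x s y z) =
      pS s * c * e t (msg w) (seqpre (xs w) t)
      (rcons (seqpre (ss w) t) s) (rcons (seqpre (ks w) t) k) x.
  move=> s x; rewrite -[RHS]mulr1 -(W_sum x s) mulr_sumr; apply: eq_bigr => y _.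
  by rewrite mulr_sumr.
under eq_bigr do under eq_bigr do rewrite e1.
under eq_bigr do rewrite -mulr_sumr e_sum mulr1.
by rewrite -mulr_suml pS_sum mul1r.
Qed.

Lemma sum_fac (t : 'I_n) w : \sum_v fac t (upd t w v) = 1.
Proof.
rewrite sum_pair; under eq_bigr do rewrite sum_fac_k.
exact: f_sum.
Qed.

Ltac bac := try done; first [case: eqP => _ /=; rewrite ?(andbT, andbF, andTb, andFb) //; bac | idtac].

Lemma pre_upd_S (t : 'I_n) w v w' :
  (pre t.+1 w' == pre t.+1 (upd t w v)) = (pre t w' == pre t w) && (tm t w' == v).
Proof.
case: v => k [s [x [y z]]].
rewrite /pre /tm /= !seqpreS !seqpre_upd // !updf_t !xpair_eqE !eqseq_rcons.
bac.
Qed.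

Lemma pre_n (w w' : Om) : (pre n w' == pre n w) = (w' == w).
Proof.
case: w => [[[[[m1 x1] y1] z1] s1] k1]; case: w' => [[[[[m2 x2] y2] z2] s2] k2].
by rewrite /pre /= !xpair_eqE !seqpre_n.
Qed.

Lemma marg j : (j <= n)%N -> forall w, prob P (fun w' => pre j w' == pre j w) = G j w.
Proof.
move=> hj; have [k hk] : exists k, (j + k = n)%N by exists (n - j)%N; rewrite subnKC.
elim: k j hj hk => [|k IH] j hj hk w.
  rewrite addn0 in hk; subst j.
  rewrite /prob (big_pred1 w) ?P_G // => w'; exact: pre_n.
have hjn : (j < n)%N by rewrite -hk -addSnnS leq_addr.
pose t := Ordinal hjn.
have hk' : (j.+1 + k = n)%N by rewrite addSnnS.
have IH' := IH j.+1 hjn hk'.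
have cell : forall v, prob P (fun w' => (pre t w' == pre t w) && (tm t w' == v)) =
    G t w * fac t (upd t w v).
  move=> v; rewrite -(G_upd w v (leqnn t)) -G_S -IH' /prob.
  by apply: eq_bigl => w'; rewrite (pre_upd_S t).
rewrite [LHS](_ : _ = prob P (fun w' => pre t w' == pre t w)) //.
rewrite /prob (partition_big (tm t) predT) //=.
rewrite -[RHS]mulr1 -(sum_fac t w) mulr_sumr; apply: eq_bigr => v _.
by rewrite -cell.
Qed.

Lemma cell (t : 'I_n) w v : prob P (fun w' => (pre t w' == pre t w) && (tm t w' == v)) =
    G t w * fac t (upd t w v).
Proof.
rewrite -(G_upd w v (leqnn t)) -G_S -(marg (ltn_ord t)) /prob.
by apply: eq_bigl => w'; rewrite pre_upd_S.
Qed.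

Lemma hW c x s : \sum_y \sum_z (c * W x s y z) = c.
Proof.
rewrite -[RHS]mulr1 -(W_sum x s) mulr_sumr; apply: eq_bigr => y _.
by rewrite mulr_sumr.
Qed.

Lemma E1 (t : 'I_n) :
  condH P (fun w => (ys w t, zs w t)) (fun w => (pre t w, ks w t, ss w t, xs w t))
  = condH P (fun w => (ys w t, zs w t)) (fun w => (xs w t, ss w t)).
Proof.
apply: (condH_CI2 (@P_ge0) (psi := fun a w => W (xs w t) (ss w t) a.1 a.2)
  (kap := fun w => G t w * (pS (ss w t) * f t (seqpre (ys w) t) (seqpre (ks w) t) (ks w t) *
     e t (msg w) (seqpre (xs w) t) (rcons (seqpre (ss w) t) (ss w t))
       (rcons (seqpre (ks w) t) (ks w t)) (xs w t)))).
- move=> w w' /=; rewrite !xpair_eqE; bac.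
- by move=> a w w' /=; rewrite xpair_eqE => /andP[/eqP-> /eqP->].
- by move=> w; rewrite sum_pair; exact: W_sum.
move=> [y z] w.
rewrite [LHS](_ : _ = prob P (fun w' => (pre t w' == pre t w) &&
     (tm t w' == (ks w t, (ss w t, (xs w t, (y, z))))))); last first.
  by apply: eq_bigl => w'; rewrite /tm !xpair_eqE; bac.
rewrite cell fac_upd_t /=; ring.
Qed.

Lemma E2 (t : 'I_n) :
  condH P (fun w => (ss w t, xs w t, ys w t, zs w t)) (fun w => (pre t w, ks w t))
  = condH P (fun w => (ss w t, xs w t, ys w t, zs w t))
      (fun w => (msg w, seqpre (xs w) t, seqpre (ks w) t, seqpre (zs w) t, seqpre (ss w) t, ks w t)).
Proof.
apply: (condH_CI2 (@P_ge0)
  (psi := fun a w => pS a.1.1.1 * e t (msg w) (seqpre (xs w) t) (rcons (seqpre (ss w) t) a.1.1.1)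
           (rcons (seqpre (ks w) t) (ks w t)) a.1.1.2 * W a.1.1.2 a.1.1.1 a.1.2 a.2)
  (kap := fun w => G t w * f t (seqpre (ys w) t) (seqpre (ks w) t) (ks w t))).
- move=> w w' /=; rewrite /pre !xpair_eqE; bac.
- move=> a w w' /=; rewrite !xpair_eqE.
  by move=> /andP[/andP[/andP[/andP[/andP[/eqP-> /eqP->] /eqP->] _] /eqP->] /eqP->].
- move=> w; rewrite sum_pair sum_pair sum_pair /=.
  under eq_bigr do under eq_bigr do rewrite hW.
  under eq_bigr do rewrite -mulr_sumr e_sum mulr1.
  exact: pS_sum.
move=> [[[s x] y] z] w.
rewrite [LHS](_ : _ = prob P (fun w' => (pre t w' == pre t w) &&
     (tm t w' == (ks w t, (s, (x, (y, z))))))); last first.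
  by apply: eq_bigl => w'; rewrite /tm !xpair_eqE; bac.
rewrite cell fac_upd_t /=; ring.
Qed.

Lemma E3 (t : 'I_n) :
  condH P (fun w => ks w t) (pre t)
  = condH P (fun w => ks w t)
      (fun w => (seqpre (ys w) t, seqpre (ks w) t, seqpre (zs w) t, seqpre (ss w) t)).
Proof.
apply: (condH_CI2 (@P_ge0)
  (psi := fun a w => f t (seqpre (ys w) t) (seqpre (ks w) t) a) (kap := G t)).
- move=> w w' /=; rewrite /pre !xpair_eqE; bac.
- by move=> a w w' /=; rewrite !xpair_eqE => /andP[/andP[/andP[/eqP-> /eqP->] _] _].
- by move=> w; exact: f_sum.
move=> a w.
rewrite /prob (partition_big (tm t) (fun v : V => v.1 == a)) /=; last by move=> w' /andP[].
rewrite mulrC -(sum_fac_k t w a).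
have -> : \sum_r fac t (upd t w (a, r)) = \sum_(v : V | v.1 == a) fac t (upd t w v).
  by rewrite sum_pair1.
rewrite mulr_sumr.
apply: eq_bigr => -[k r] /= /eqP hk; subst k.
rewrite -cell /prob; apply: eq_bigl => w'; rewrite /tm !xpair_eqE; bac.
Qed.

Definition cv (t : 'I_n) (b1 b2 b3 b4 b5 b6 b7 b8 b9 b10 b11 : bool) (w : Om) :=
  (if b1 then Some (msg w) else None,
   if b2 then Some (seqpre (xs w) t) else None,
   if b3 then Some (seqpre (ys w) t) else None,
   if b4 then Some (seqpre (zs w) t) else None,
   if b5 then Some (seqpre (ss w) t) else None,
   if b6 then Some (seqpre (ks w) t) else None,
   if b7 then Some (xs w t) else None,
   if b8 then Some (ys w t) else None,
   if b9 then Some (zs w t) else None,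
   if b10 then Some (ss w t) else None,
   if b11 then Some (ks w t) else None).

Ltac bt V pat := idtac.

Ltac getcv t V :=
  let b1 := match V with context [@msg _ _ _ _ _ _ _ _] => constr:(true) | _ => constr:(false) end in
  let b2 := match V with context [@seqpre _ _ (@xs _ _ _ _ _ _ _ _) _] => constr:(true) | _ => constr:(false) end in
  let b3 := match V with context [@seqpre _ _ (@ys _ _ _ _ _ _ _ _) _] => constr:(true) | _ => constr:(false) end in
  let b4 := match V with context [@seqpre _ _ (@zs _ _ _ _ _ _ _ _) _] => constr:(true) | _ => constr:(false) end in
  let b5 := match V with context [@seqpre _ _ (@ss _ _ _ _ _ _ _ _) _] => constr:(true) | _ => constr:(false) end in
  let b6 := match V with context [@seqpre _ _ (@ks _ _ _ _ _ _ _ _) _] => constr:(true) | _ => constr:(false) end in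
  let b7 := match V with context [@seqpre _ _ (@xs _ _ _ _ _ _ _ _) (_.+1)] => constr:(true)
                       | context [@fun_of_fin _ _ _ (@xs _ _ _ _ _ _ _ _) _] => constr:(true) | _ => constr:(false) end in
  let b8 := match V with context [@seqpre _ _ (@ys _ _ _ _ _ _ _ _) (_.+1)] => constr:(true)
                       | context [@fun_of_fin _ _ _ (@ys _ _ _ _ _ _ _ _) _] => constr:(true) | _ => constr:(false) end in
  let b9 := match V with context [@seqpre _ _ (@zs _ _ _ _ _ _ _ _) (_.+1)] => constr:(true)
                       | context [@fun_of_fin _ _ _ (@zs _ _ _ _ _ _ _ _) _] => constr:(true) | _ => constr:(false) end in
  let b10 := match V with context [@seqpre _ _ (@ss _ _ _ _ _ _ _ _) (_.+1)] => constr:(true)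
                       | context [@fun_of_fin _ _ _ (@ss _ _ _ _ _ _ _ _) _] => constr:(true) | _ => constr:(false) end in
  let b11 := match V with context [@seqpre _ _ (@ks _ _ _ _ _ _ _ _) (_.+1)] => constr:(true)
                       | context [@fun_of_fin _ _ _ (@ks _ _ _ _ _ _ _ _) _] => constr:(true) | _ => constr:(false) end in
  constr:(cv t b1 b2 b3 b4 b5 b6 b7 b8 b9 b10 b11).

Lemma eqSome (T0 : eqType) (a b : T0) : (Some a == Some b) = (a == b). Proof. by []. Qed.
Lemma eqNone (T0 : eqType) : (None == None :> option T0) = true. Proof. by []. Qed.

Ltac fibtac := move=> ? ?; rewrite /cv /pre /=; rewrite ?seqpreS ?xpair_eqE ?eqseq_rcons ?eqSome ?eqNone /=;
  rewrite ?(andbT, andTb); bac.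

Ltac canon t :=
  repeat match goal with |- context [Hj ?P0 ?V] =>
    lazymatch V with context [@cv] => fail | _ => idtac end;
    let c := getcv t V in
    let H := fresh "H" in
    assert (H : Hj P0 V = Hj P0 c); [ (apply: Hj_fib; fibtac) | rewrite H; clear H ]
  end.

Lemma main (t : 'I_n) :
  condH P (fun w => seqpre (ks w) t.+1)
          (fun w => (seqpre (zs w) t.+1, seqpre (ss w) t.+1))
  + condMI P (fun w => (msg w, seqpre (xs w) t.+1)) (fun w => seqpre (ys w) t.+1)
          (fun w => (seqpre (ks w) t.+1, seqpre (zs w) t.+1, seqpre (ss w) t.+1))
  + condH P (fun w => seqpre (ss w) t.+1) (fun w => seqpre (zs w) t.+1)
  <=
  condH P (fun w => seqpre (ks w) t)
          (fun w => (seqpre (zs w) t, seqpre (ss w) t))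
  + condMI P (fun w => (msg w, seqpre (xs w) t)) (fun w => seqpre (ys w) t)
          (fun w => (seqpre (ks w) t, seqpre (zs w) t, seqpre (ss w) t))
  + condH P (fun w => seqpre (ss w) t) (fun w => seqpre (zs w) t)
  + condH P (fun w => ks w t)
          (fun w => (msg w, seqpre (xs w) t, seqpre (ks w) t, seqpre (zs w) t, seqpre (ss w) t))
  + condMI P (fun w => xs w t) (fun w => ys w t) (fun w => (zs w t, ss w t))
  + condH P (fun w => ss w t) (fun w => zs w t).
Proof.
have f1 := E1 t. have f2 := E2 t. have f3 := E3 t.
have s1 := Hj_submod (@P_ge0) (fun w => zs w t)
  (fun w => (seqpre (ys w) t, seqpre (ks w) t, seqpre (ss w) t, ks w t)) (fun w => seqpre (zs w) t).
have s2 := Hj_submod (@P_ge0) (fun w => (ys w t, ss w t))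
  (fun w => (seqpre (ys w) t, seqpre (ks w) t, seqpre (zs w) t, seqpre (ss w) t, ks w t))
  (fun w => zs w t).
have s3 := Hj_submod (@P_ge0) (fun w => zs w t) (fun w => (pre t w, ks w t))
  (fun w => (xs w t, ss w t)).
have s4 := Hj_submod (@P_ge0) (fun w => ys w t) (fun w => (pre t w, ks w t))
  (fun w => (zs w t, xs w t, ss w t)).
have s5 := Hj_submod (@P_ge0) (fun w => (ss w t, xs w t, zs w t)) (fun w => seqpre (ys w) t)
  (fun w => (msg w, seqpre (xs w) t, seqpre (ks w) t, seqpre (zs w) t, seqpre (ss w) t, ks w t)).
have s6 := Hj_submod (@P_ge0) (fun w => ys w t) (fun w => seqpre (ys w) t)
  (fun w => (msg w, seqpre (xs w) t, seqpre (ks w) t, seqpre (zs w) t, seqpre (ss w) t,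
             ks w t, ss w t, xs w t, zs w t)).
move: f1 f2 f3 s1 s2 s3 s4 s5 s6.
rewrite /condMI !(condH_Hj (@P_ge0)) /pre.
canon t.
move=> f1 f2 f3 s1 s2 s3 s4 s5 s6.
lra.
Qed.

End Chan.

Unset Implicit Arguments.
(* j : 'I_n is 0-based; the paper's index is j+1, so A^{j+1} = seqpre A (j.+1),
   A^{j} = seqpre A j, and the single letter A_{j+1} is A j. *)
Theorem lemma1 (R : realType) (n : nat) (M X Y Z S K : finType)
  (pS : S -> R) (W : X -> S -> Y -> Z -> R)
  (f : nat -> seq Y -> seq K -> K -> R)
  (e : nat -> M -> seq X -> seq S -> seq K -> X -> R)
  (hM : (0 < #|M|)%N)
  (pS_ge0 : forall s, 0 <= pS s) (pS_sum : \sum_s pS s = 1)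
  (W_ge0 : forall x s y z, 0 <= W x s y z)
  (W_sum : forall x s, \sum_y \sum_z W x s y z = 1)
  (f_ge0 : forall i ys ks k, 0 <= f i ys ks k)
  (f_sum : forall i ys ks, \sum_k f i ys ks k = 1)
  (e_ge0 : forall i m xs ss ks x, 0 <= e i m xs ss ks x)
  (e_sum : forall i m xs ss ks, \sum_x e i m xs ss ks x = 1)
  (j : 'I_n) :
  let P := @joint R n M X Y Z S K pS W f e in
  condH P (fun w => seqpre (ks w) j.+1)
          (fun w => (seqpre (zs w) j.+1, seqpre (ss w) j.+1))
  + condMI P (fun w => (msg w, seqpre (xs w) j.+1)) (fun w => seqpre (ys w) j.+1)
          (fun w => (seqpre (ks w) j.+1, seqpre (zs w) j.+1, seqpre (ss w) j.+1))
  + condH P (fun w => seqpre (ss w) j.+1) (fun w => seqpre (zs w) j.+1)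
  <=
  condH P (fun w => seqpre (ks w) j)
          (fun w => (seqpre (zs w) j, seqpre (ss w) j))
  + condMI P (fun w => (msg w, seqpre (xs w) j)) (fun w => seqpre (ys w) j)
          (fun w => (seqpre (ks w) j, seqpre (zs w) j, seqpre (ss w) j))
  + condH P (fun w => seqpre (ss w) j) (fun w => seqpre (zs w) j)
  + condH P (fun w => ks w j)
          (fun w => (msg w, seqpre (xs w) j, seqpre (ks w) j, seqpre (zs w) j, seqpre (ss w) j))
  + condMI P (fun w => xs w j) (fun w => ys w j) (fun w => (zs w j, ss w j))
  + condH P (fun w => ss w j) (fun w => zs w j).
Proof.
exact: (main pS_ge0 pS_sum W_ge0 W_sum f_ge0 f_sum e_ge0 e_sum j).
Qed.
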